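(* Let $p\ge2$ and let $\epsilon>0$ be sufficiently small. For $\chi\in[0,\pi]$, $\psi\in[-\pi/2,\pi/2]$ set $A_0=e^{i\chi\sigma_z}$, $a_0=i\sigma_x\cos\psi+i\sigma_z\sin\psi$ and $$Q_p(\chi,\psi)=\big[(\,A_0,\ A_0^{-1}a_0A_0^{p+1},\ A_0^{-1}a_0A_0,\ a_0^{-1}\,)\big]\in R(T^2,2).$$ If $Q_p(\chi,\psi)=L_s(\phi,\theta)$ for some spherical-polar coordinates $(\phi,\theta)$, then $\phi=\pi/2$ and there is $n\in\{0,1,\dots,p-1\}$ with $$\chi=(n+\tfrac12)\tfrac{\pi}{p},\qquad \psi=(-1)^{n+1}\big(\tfrac{\pi}{2}-\epsilon\big).$$
   Context: Pauli matrices standard; $[A,B]=ABA^{-1}B^{-1}$. $R(T^2,2)$ is the space of tuples $(A,B,a,b)\in SU(2)^4$ with $\operatorname{tr}a=\operatorname{tr}b=0$ and $[A,B]ab=1$ modulo simultaneous conjugation (the tuple defining $Q_p$ satisfies these conditions). For $\nu=\epsilon\sin\phi$, $L_s(\phi,\theta)=[(A,B,a,b)]$ with $a=i\sigma_z$, $h=(\cos^2\nu+\sin^2\nu\sin^2\theta)^{-1/2}(i\sigma_x\cos\nu-i\sigma_z\sin\nu\sin\theta)$, $A=h(\cos\phi+i\sin\phi(\sigma_x\cos\theta+\sigma_y\sin\theta))$, $B=\cos\nu+i\sin\nu(\sigma_x\cos\theta+\sigma_y\sin\theta)$, $b=-ha^{-1}h^{-1}$. ($Q_p(\chi,\psi)$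 is the image of the disk Lagrangian point $[(e^{i\chi\sigma_z},1,a_0,a_0^{-1})]$ under the mapping class $\alpha_1^{-1}T_a^p$ that produces the simple knot in $L(p,1)$ representing $1\in H_1(L(p,1);\mathbb{Z})$.) *)

(* Defs.v *)
From Stdlib Require Import Reals.
Open Scope R_scope.

(* An element of the real span of {1, i sigma_x, i sigma_y, i sigma_z}
   (Pauli matrices standard), encoded by its four real coordinates:
   q = q0 * 1 + q1 * (i sigma_x) + q2 * (i sigma_y) + q3 * (i sigma_z).
   SU(2) is exactly the set of such q with q0^2+q1^2+q2^2+q3^2 = 1. *)
Record M2 := mkM2 { c0 : R; cx : R; cy : R; cz : R }.

(* Matrix product, using (i s_a)(i s_b) = - delta_ab 1 - eps_abc (i s_c). *)
Definition mmul (p q : M2) : M2 :=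
  mkM2 (c0 p * c0 q - cx p * cx q - cy p * cy q - cz p * cz q)
       (c0 p * cx q + cx p * c0 q - (cy p * cz q - cz p * cy q))
       (c0 p * cy q + cy p * c0 q - (cz p * cx q - cx p * cz q))
       (c0 p * cz q + cz p * c0 q - (cx p * cy q - cy p * cx q)).

Definition mone : M2 := mkM2 1 0 0 0.
Definition isx : M2 := mkM2 0 1 0 0.
Definition isy : M2 := mkM2 0 0 1 0.
Definition isz : M2 := mkM2 0 0 0 1.

Definition madd (p q : M2) : M2 :=
  mkM2 (c0 p + c0 q) (cx p + cx q) (cy p + cy q) (cz p + cz q).
Definition mscal (r : R) (q : M2) : M2 :=
  mkM2 (r * c0 q) (r * cx q) (r * cy q) (r * cz q).
Definition mopp (q : M2) : M2 := mscal (-1) q.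

Definition mdet (q : M2) : R := c0 q ^ 2 + cx q ^ 2 + cy q ^ 2 + cz q ^ 2.
Definition mtr (q : M2) : R := 2 * c0 q.
Definition minv (q : M2) : M2 :=
  mscal (/ mdet q) (mkM2 (c0 q) (- cx q) (- cy q) (- cz q)).

Fixpoint mpow (q : M2) (n : nat) : M2 :=
  match n with O => mone | S k => mmul q (mpow q k) end.

Definition inSU2 (q : M2) : Prop := mdet q = 1.

Definition comm (A B : M2) : M2 := mmul (mmul (mmul A B) (minv A)) (minv B).

Definition tuple4 : Type := (M2 * M2 * M2 * M2)%type.

Definition conj (g x : M2) : M2 := mmul (mmul g x) (minv g).

(* equality of points of R(T^2,2): equality up to simultaneous conjugation
   by an element of SU(2) *)
Definition Req (t u : tuple4) : Prop :=
  let '(A, B, a, b) := t in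
  let '(A', B', a', b') := u in
  exists g : M2, inSU2 g /\
    conj g A = A' /\ conj g B = B' /\ conj g a = a' /\ conj g b = b'.

Definition A0 (chi : R) : M2 := madd (mscal (cos chi) mone) (mscal (sin chi) isz).
Definition a0 (psi : R) : M2 := madd (mscal (cos psi) isx) (mscal (sin psi) isz).
Definition Qp (p : nat) (chi psi : R) : tuple4 :=
  (A0 chi,
   mmul (mmul (minv (A0 chi)) (a0 psi)) (mpow (A0 chi) (p + 1)),
   mmul (mmul (minv (A0 chi)) (a0 psi)) (A0 chi),
   minv (a0 psi)).

Definition Ls (eps phi theta : R) : tuple4 :=
  let nu := eps * sin phi in
  let a := isz in
  let h := mscal (/ sqrt (cos nu ^ 2 + sin nu ^ 2 * sin theta ^ 2))
             (madd (mscal (cos nu) isx) (mscal (- (sin nu * sin theta)) isz)) in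
  let u := madd (mscal (cos theta) isx) (mscal (sin theta) isy) in
  let A := mmul h (madd (mscal (cos phi) mone) (mscal (sin phi) u)) in
  let B := madd (mscal (cos nu) mone) (mscal (sin nu) u) in
  let b := mopp (mmul (mmul h (minv a)) (minv h)) in
  (A, B, a, b).

(* Main.v *)
Require Import Defs.
From Stdlib Require Import Reals Lra Lia Psatz ZArith.
Open Scope R_scope.


Lemma M2eq (p q : M2) : c0 p = c0 q -> cx p = cx q -> cy p = cy q -> cz p = cz q -> p = q.
Proof. destruct p, q; simpl; intros; subst; reflexivity. Qed.

Lemma conj_mul g x y : mdet g <> 0 -> conj g (mmul x y) = mmul (conj g x) (conj g y).
Proof.
  destruct g as [g0 g1 g2 g3], x as [x0 x1 x2 x3], y as [y0 y1 y2 y3].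
  unfold conj, mmul, minv, mscal, mdet; simpl; intro H.
  apply M2eq; simpl; field; contradict H; rewrite <- H; ring.
Qed.

Lemma conj_c0 g x : mdet g <> 0 -> c0 (conj g x) = c0 x.
Proof.
  destruct g as [g0 g1 g2 g3], x as [x0 x1 x2 x3].
  unfold conj, mmul, minv, mscal, mdet; simpl; intro H. field; contradict H; rewrite <- H; ring.
Qed.

Lemma conj_opp g x : conj g (mopp x) = mopp (conj g x).
Proof.
  destruct g as [g0 g1 g2 g3], x as [x0 x1 x2 x3].
  unfold conj, mopp, mmul, minv, mscal, mdet; apply M2eq; simpl; ring.
Qed.
Lemma mmul_assoc x y z : mmul x (mmul y z) = mmul (mmul x y) z.
Proof. destruct x, y, z; unfold mmul; apply M2eq; simpl; ring. Qed.
Lemma mmul_minv_r q : mdet q <> 0 -> mmul q (minv q) = mone.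
Proof. destruct q as [q0 q1 q2 q3]; unfold minv, mmul, mscal, mdet, mone; simpl; intro H.
  apply M2eq; simpl; field; contradict H; rewrite <- H; ring. Qed.
Lemma mmul_minv_l q : mdet q <> 0 -> mmul (minv q) q = mone.
Proof. destruct q as [q0 q1 q2 q3]; unfold minv, mmul, mscal, mdet, mone; simpl; intro H.
  apply M2eq; simpl; field; contradict H; rewrite <- H; ring. Qed.
Lemma mmul_1_l q : mmul mone q = q.
Proof. destruct q; unfold mmul, mone; apply M2eq; simpl; ring. Qed.
Lemma mmul_1_r q : mmul q mone = q.
Proof. destruct q; unfold mmul, mone; apply M2eq; simpl; ring. Qed.
Lemma minv_det1 q : mdet q = 1 -> minv q = mkM2 (c0 q) (- cx q) (- cy q) (- cz q).
Proof. intro H. unfold minv. rewrite H. destruct q; unfold mscal; simpl. apply M2eq; simpl; field. Qed.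
Lemma mdet_A0 chi : mdet (A0 chi) = 1.
Proof. unfold mdet, A0; simpl. pose proof (sin2_cos2 chi). unfold Rsqr in *. nra. Qed.
Lemma mdet_a0 psi : mdet (a0 psi) = 1.
Proof. unfold mdet, a0; simpl. pose proof (sin2_cos2 psi). unfold Rsqr in *. nra. Qed.
Lemma minv_a0 psi : minv (a0 psi) = mopp (a0 psi).
Proof. rewrite (minv_det1 _ (mdet_a0 psi)). unfold a0, mopp; apply M2eq; simpl; ring. Qed.
Lemma c0_comm x y : c0 (mmul x y) = c0 (mmul y x).
Proof. destruct x, y; simpl; ring. Qed.
Lemma mpow_comm q n : mmul q (mpow q n) = mmul (mpow q n) q.
Proof. induction n; simpl. rewrite mmul_1_l, mmul_1_r; reflexivity.
  rewrite <- mmul_assoc, <- IHn. reflexivity. Qed.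
Lemma mpow_A0 chi n : mpow (A0 chi) n = mkM2 (cos (INR n * chi)) 0 0 (sin (INR n * chi)).
Proof. induction n. simpl. rewrite Rmult_0_l, cos_0, sin_0. reflexivity.
  simpl mpow. rewrite IHn. rewrite S_INR.
  replace ((INR n + 1) * chi) with (chi + INR n * chi) by ring.
  rewrite cos_plus, sin_plus. unfold A0, mmul; apply M2eq; simpl; ring. Qed.
Lemma sin_mult_0 x n : sin x = 0 -> sin (INR n * x) = 0.
Proof. intro H. induction n. simpl; rewrite Rmult_0_l; apply sin_0.
  rewrite S_INR. replace ((INR n + 1) * x) with (INR n * x + x) by ring.
  rewrite sin_plus, IHn, H; ring. Qed.
Lemma cos_npi n : cos (INR n * PI) = (-1) ^ n.
Proof. induction n. simpl; rewrite Rmult_0_l; apply cos_0.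
  rewrite S_INR. replace ((INR n + 1) * PI) with (INR n * PI + PI) by ring.
  rewrite neg_cos, IHn; simpl; ring. Qed.
Lemma pow_m1 n : (-1) ^ n = 1 \/ (-1) ^ n = -1.
Proof. induction n; simpl. left; ring. destruct IHn as [H|H]; rewrite H; [right|left]; ring. Qed.

Theorem lemma5p5 :
  forall p : nat, (2 <= p)%nat ->
  exists eps0 : R, 0 < eps0 /\
  forall eps : R, 0 < eps < eps0 ->
  forall chi psi : R, 0 <= chi <= PI -> - (PI / 2) <= psi <= PI / 2 ->
  forall phi theta : R, 0 <= phi <= PI ->
  Req (Qp p chi psi) (Ls eps phi theta) ->
  phi = PI / 2 /\
  exists n : nat, (n < p)%nat /\
    chi = (INR n + 1 / 2) * (PI / INR p) /\
    psi = (-1) ^ (n + 1) * (PI / 2 - eps).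
Proof.
intros p Hp. exists 1. split; [lra|].
intros eps Heps chi psi Hchi Hpsi phi theta Hphi H.
unfold Qp, Ls in H. cbv zeta in H.
unfold Req in H.
destruct H as (g & Hg & E1 & E2 & E3 & E4).
assert (Hg0 : mdet g <> 0) by (unfold inSU2 in Hg; lra).
assert (HA : mdet (A0 chi) <> 0) by (rewrite mdet_A0; lra).
assert (QI : mmul (A0 chi) (mmul (mmul (minv (A0 chi)) (a0 psi)) (A0 chi)) = mopp (mmul (minv (a0 psi)) (A0 chi))).
{ rewrite !mmul_assoc, (mmul_minv_r _ HA), mmul_1_l, minv_a0.
  generalize (a0 psi) (A0 chi); intros [] []; unfold mopp, mscal; apply M2eq; simpl; ring. }
apply (f_equal (conj g)) in QI. rewrite conj_opp, (conj_mul g (A0 chi)), (conj_mul g (minv (a0 psi))) in QI by exact Hg0.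
rewrite E1, E3, E4 in QI.
assert (Hsp : 0 <= sin phi <= 1) by (split; [apply sin_ge_0; lra | apply (proj2 (SIN_bound phi))]).
assert (Hc : 0 < cos (eps * sin phi)) by (apply cos_gt_0; pose proof PI2_1; nra).
set (c := cos (eps * sin phi)) in *. set (s := sin (eps * sin phi)) in *.
set (D := c ^ 2 + s ^ 2 * sin theta ^ 2) in *.
assert (HD : 0 < D) by (unfold D; nra).
set (k := / sqrt D) in *.
assert (Hkp : 0 < k) by (unfold k; apply Rinv_0_lt_compat, sqrt_lt_R0; lra).
assert (Hk : k * k * D = 1).
{ unfold k. rewrite <- Rinv_mult, sqrt_sqrt by lra. field. lra. }
set (h := mscal k (madd (mscal c isx) (mscal (- (s * sin theta)) isz))) in *.
assert (Hh : mdet h = 1). { unfold h, mdet; simpl. unfold D in Hk. nra. }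
rewrite (minv_det1 h Hh), (minv_det1 isz) in QI by (unfold mdet; simpl; ring).
apply (f_equal cy) in QI. unfold h in QI. simpl in QI.
match type of QI with ?L = ?R => assert (X : L - R = 2 * k * c * cos phi + (k*k*D - 1) * (k*c*cos phi + k*s*sin theta^2*sin phi)) by (unfold D; ring) end.
rewrite Hk in X.
assert (Hcp : cos phi = 0).
{ assert (2 * k * c * cos phi = 0) by lra.
  destruct (Rmult_integral _ _ H) as [H1|H1]; [|exact H1]. nra. }
assert (Hphi2 : phi = PI / 2).
{ apply cos_inj; [lra | pose proof PI2_RGT_0; lra | rewrite cos_PI2; exact Hcp]. }
clear QI X.
unfold h, k, D, c, s in *. clear h k D c s Hh Hk Hkp HD Hc Hsp.
subst phi. rewrite sin_PI2, cos_PI2, Rmult_1_r in *.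
assert (T1 : cos chi = c0 (conj g (A0 chi))) by (rewrite conj_c0 by exact Hg0; unfold A0; simpl; ring).
rewrite E1 in T1.
assert (T2 : - (sin (INR p * chi) * sin psi) = c0 (conj g (mmul (mmul (minv (A0 chi)) (a0 psi)) (mpow (A0 chi) (p + 1))))).
{ rewrite conj_c0 by exact Hg0. rewrite Nat.add_1_r. simpl mpow.
  rewrite c0_comm, mpow_comm, <- !mmul_assoc, (mmul_assoc (A0 chi)), (mmul_minv_r _ HA), mmul_1_l.
  rewrite mpow_A0. unfold a0; simpl; ring. }
rewrite E2 in T2.
assert (T3 : c0 (mmul (mmul (mmul (minv (A0 chi)) (a0 psi)) (A0 chi)) (minv (a0 psi))) = c0 (mmul (conj g (mmul (mmul (minv (A0 chi)) (a0 psi)) (A0 chi))) (conj g (minv (a0 psi))))).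
{ rewrite <- conj_mul, conj_c0 by exact Hg0. reflexivity. }
rewrite E3, E4 in T3.
rewrite (minv_det1 _ (mdet_A0 chi)), minv_a0 in T3.
clear E1 E2 E3 E4.
assert (Hc : 0 < cos eps) by (apply cos_gt_0; pose proof PI2_1; nra).
set (c := cos eps) in *. set (s := sin eps) in *.
set (D := c ^ 2 + s ^ 2 * sin theta ^ 2) in *.
assert (HD : 0 < D) by (unfold D; nra).
set (k := / sqrt D) in *.
assert (Hkp : 0 < k) by (unfold k; apply Rinv_0_lt_compat, sqrt_lt_R0; lra).
assert (Hk : k * k * D = 1).
{ unfold k. rewrite <- Rinv_mult, sqrt_sqrt by lra. field. lra. }
set (h := mscal k (madd (mscal c isx) (mscal (- (s * sin theta)) isz))) in *.
assert (Hh : mdet h = 1). { unfold h, mdet; simpl. unfold D in Hk. nra. }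
rewrite (minv_det1 h Hh), (minv_det1 isz) in T3 by (unfold mdet; simpl; ring).
unfold h in T1, T3. simpl in T1, T2, T3. ring_simplify in T1. ring_simplify in T2. ring_simplify in T3.

split; [reflexivity|].
pose proof (sin2_cos2 chi) as Pchi. pose proof (sin2_cos2 psi) as Ppsi.
pose proof (sin2_cos2 theta) as Pth. pose proof (sin2_cos2 eps) as Peps.
fold c s in Peps. unfold Rsqr in *.
assert (HY2 : sin chi ^ 2 = k ^ 2 * sin theta ^ 2).
{ assert (X2 : cos chi ^ 2 = k^2 * c^2 * cos theta ^ 2) by (rewrite T1; ring).
  unfold D in Hk. nra. }
assert (HT3 : sin chi ^ 2 * cos psi ^ 2 = k ^ 2 * s ^ 2 * sin theta ^ 2).
{ unfold D in Hk. nra. }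
rewrite HY2 in HT3.
assert (Hcase : sin theta = 0 \/ cos psi ^ 2 = s ^ 2).
{ assert (k ^ 2 * sin theta ^ 2 * (cos psi ^ 2 - s ^ 2) = 0) by lra.
  destruct (Rmult_integral _ _ H) as [H1|H1].
  - left. destruct (Rmult_integral _ _ H1) as [H2|H2]; [nra|nra].
  - right; lra. }
destruct Hcase as [Hst | Hps].
{ exfalso. assert (sin chi = 0) by (rewrite Hst in HY2; nra).
  rewrite (sin_mult_0 chi p H) in T2. lra. }
assert (HP : 0 <= cos psi) by (apply cos_ge_0; lra).
assert (Hs : 0 < s) by (unfold s; apply sin_gt_0; pose proof PI2_1; lra).
assert (HPs : cos psi = s) by nra.
assert (HQ2 : sin psi ^ 2 = c ^ 2) by nra.
assert (HS2 : sin (INR p * chi) ^ 2 = 1).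
{ assert (c ^ 2 = sin (INR p * chi) ^ 2 * sin psi ^ 2) by (rewrite <- T2; ring).
  assert ((sin (INR p * chi) ^ 2 - 1) * sin psi ^ 2 = 0) by lra.
  destruct (Rmult_integral _ _ H0) as [H1|H1]; nra. }
assert (HC0 : cos (INR p * chi) = 0).
{ pose proof (sin2_cos2 (INR p * chi)). unfold Rsqr in H. nra. }
destruct (cos_eq_0_0 _ HC0) as [z Hz].
assert (Hp0 : 0 < INR p) by (apply lt_0_INR; lia).
assert (HPI := PI_RGT_0).
assert (Hz0 : (0 <= z)%Z).
{ apply le_IZR. assert (-1 < IZR z). { assert (0 <= INR p * chi) by nra. nra. }
  apply lt_IZR in H. apply IZR_le. lia. }
assert (Hzp : (z < Z.of_nat p)%Z).
{ apply lt_IZR. rewrite <- INR_IZR_INZ. assert (INR p * chi <= INR p * PI) by nra. nra. }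
exists (Z.to_nat z).
assert (Hn : INR (Z.to_nat z) = IZR z) by (rewrite INR_IZR_INZ, Z2Nat.id by lia; reflexivity).
split; [lia|]. split.
{ rewrite Hn. apply (Rmult_eq_reg_l (INR p)); [|lra]. rewrite Hz. field. lra. }
assert (HS : sin (INR p * chi) = (-1) ^ (Z.to_nat z)).
{ rewrite Hz, sin_plus, cos_PI2, sin_PI2, <- Hn, cos_npi. ring. }
rewrite HS in T2.
rewrite pow_add. simpl (pow (-1) 1).
assert (Hcs : cos (PI / 2 - eps) = s) by (unfold s; apply cos_shift).
destruct (pow_m1 (Z.to_nat z)) as [Hs1|Hs1]; rewrite Hs1 in T2 |- *.
- assert (Hpn : psi <= 0).
  { destruct (Rle_or_lt psi 0) as [|Hlt]; [assumption|].
    assert (0 < sin psi) by (apply sin_gt_0; lra). lra. }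
  assert (- psi = PI / 2 - eps).
  { pose proof PI2_1. apply cos_inj; [lra|lra| rewrite cos_neg, Hcs; exact HPs]. }
  lra.
- assert (Hpn : 0 <= psi).
  { destruct (Rle_or_lt 0 psi) as [|Hlt]; [assumption|].
    assert (0 < sin (- psi)) by (apply sin_gt_0; lra). rewrite sin_neg in H. lra. }
  assert (psi = PI / 2 - eps).
  { pose proof PI2_1. apply cos_inj; [lra|lra| rewrite Hcs; exact HPs]. }
  lra.
Qed.
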